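(* Let $n\ge2$, $T\ge2$, $G=([T],\mathcal{E})$ a connected undirected graph with incidence matrix $D$ (any orientation) and $M=D\otimes I_n$. For each $t\in[T]$ let $G_t=([n],\mathcal{E}_t)$ be an undirected graph and $C_t\in\{-1,1,0\}^{|\mathcal{E}_t|\times n}$ the incidence matrix of some orientation of its edges; let $C=\mathrm{blockdiag}(C_1,\dots,C_T)$ and $O_T=[C_1^\top\ \cdots\ C_T^\top]^\top$. Let $P=I_T\otimes(I_n-\frac1n\mathbf{1}_n\mathbf{1}_n^\top)$. If $\mu>0$ and $\mathrm{rank}(O_T)=n-1$, then $\mathrm{null}(\mu M^\top M+C^\top C)=\mathrm{span}(\mathbf{1}_{nT})$. Consequently, the column space of $P$ is contained in the column space of $\mu M^\top M+C^\top C$.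
   Context: $\mathbf{1}_k$ denotes the all-ones vector in $\mathbb{R}^k$; $\otimes$ is the Kronecker product. *)

(* Defs.v *)
From HB Require Import structures.
From mathcomp Require Import all_boot all_order all_algebra.
Set Implicit Arguments. Unset Strict Implicit. Unset Printing Implicit Defensive.
Import Order.TTheory GRing.Theory Num.Theory.
Local Open Scope ring_scope.

Lemma ord_divn_lt (m n : nat) (i : 'I_(m * n)) : (i %/ n < m)%N.
Proof.
case: n i => [|n] i; first by case: i => i; rewrite muln0.
by rewrite ltn_divLR // ltn_ord.
Qed.

Lemma ord_modn_lt (m n : nat) (i : 'I_(m * n)) : (i %% n < n)%N.
Proof.
case: n i => [|n] i; first by case: i => i; rewrite muln0.
by rewrite ltn_mod.
Qed.

Definition ord_div (m n : nat) (i : 'I_(m * n)) : 'I_m := Ordinal (ord_divn_lt i).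
Definition ord_mod (m n : nat) (i : 'I_(m * n)) : 'I_n := Ordinal (ord_modn_lt i).

(* Kronecker product A (x) B; row (i1,i2) <-> i1 * m2 + i2, column
   (j1,j2) <-> j1 * n2 + j2 (standard block layout). *)
Definition kron {R : pzRingType} (m1 n1 m2 n2 : nat)
  (A : 'M[R]_(m1, n1)) (B : 'M[R]_(m2, n2)) : 'M[R]_(m1 * m2, n1 * n2) :=
  \matrix_(i, j) (A (ord_div i) (ord_div j) * B (ord_mod i) (ord_mod j)).

(* An undirected simple graph on vertex set 'I_V with m edges, each edge e
   given together with an orientation (src e -> tgt e). *)
Definition simple_oriented_graph (V m : nat) (src tgt : 'I_m -> 'I_V) : Prop :=
  (forall e, src e != tgt e) /\
  (forall e f, (src e == src f) && (tgt e == tgt f)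
               || (src e == tgt f) && (tgt e == src f) -> e = f).

Definition adj (V m : nat) (src tgt : 'I_m -> 'I_V) : rel 'I_V :=
  fun u v => [exists e, ((src e == u) && (tgt e == v))
                        || ((src e == v) && (tgt e == u))].

Definition graph_connected (V m : nat) (src tgt : 'I_m -> 'I_V) : Prop :=
  forall u v : 'I_V, connect (adj src tgt) u v.

Definition incidence {R : pzRingType} (V m : nat) (src tgt : 'I_m -> 'I_V)
  : 'M[R]_(m, V) :=
  \matrix_(e, v) ((v == src e)%:R - (v == tgt e)%:R).

Lemma sum_const_n (T n : nat) : (\sum_(t < T) n)%N = (T * n)%N.
Proof. by rewrite sum_nat_const card_ord. Qed.

Definition blockdiag {R : pzRingType} (T n : nat) (m : 'I_T -> nat)
  (C : forall t : 'I_T, 'M[R]_(m t, n)) : 'M[R]_(\sum_(t < T) m t, T * n) :=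
  castmx (erefl, sum_const_n T n)
    (@mxblock _ T T m (fun _ => n) (fun i j => if i == j then C i else 0)).

Definition vstack {R : pzRingType} (T n : nat) (m : 'I_T -> nat)
  (C : forall t : 'I_T, 'M[R]_(m t, n)) : 'M[R]_(\sum_(t < T) m t, n) :=
  @mxcol _ T m n C.

(* Main.v *)
Require Import Defs.
From HB Require Import structures.
From mathcomp Require Import all_boot all_order all_algebra zify.
Import Order.TTheory GRing.Theory Num.Theory.
Local Open Scope ring_scope.

Lemma idx_lt {T n : nat} (t : 'I_T) (j : 'I_n) : (t * n + j < T * n)%N.
Proof. have := ltn_ord t; have := ltn_ord j; nia. Qed.

Definition idx {T n : nat} (t : 'I_T) (j : 'I_n) : 'I_(T * n) := Ordinal (idx_lt t j).

Lemma ord_div_idx {T n} (t : 'I_T) (j : 'I_n) : ord_div (idx t j) = t.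
Proof.
apply/val_inj => /=. have n0 : (0 < n)%N by apply: leq_ltn_trans (ltn_ord j).
by rewrite divnMDl // divn_small ?addn0.
Qed.

Lemma ord_mod_idx {T n} (t : 'I_T) (j : 'I_n) : ord_mod (idx t j) = j.
Proof.
apply/val_inj => /=. by rewrite modnMDl modn_small.
Qed.

Lemma idx_div_mod {T n} (k : 'I_(T * n)) : idx (ord_div k) (ord_mod k) = k.
Proof. by apply/val_inj => /=; rewrite -divn_eq. Qed.

Lemma sum_idx {V : nmodType} {T n} (F : 'I_(T * n) -> V) :
  \sum_(k < T * n) F k = \sum_(t < T) \sum_(j < n) F (idx t j).
Proof.
rewrite pair_big /=.
rewrite (reindex (fun p : 'I_T * 'I_n => idx p.1 p.2)) //.
exists (fun k => (ord_div k, ord_mod k)) => [[t j] _|k _] /=.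
  by rewrite ord_div_idx ord_mod_idx.
by rewrite idx_div_mod.
Qed.

Lemma sum_lt_const (T n : nat) (t : 'I_T) :
  (\sum_(k < T | (k < t)%N) n = t * n)%N.
Proof.
rewrite -(big_ord_widen_cond T (fun _ => true) (fun _ => n) (ltnW (ltn_ord t))).
by rewrite sum_nat_const card_ord.
Qed.

Lemma inc_sum (R : pzRingType) V (s g : 'I_V) (f : 'I_V -> R) :
  \sum_v ((v == s)%:R - (v == g)%:R) * f v = f s - f g.
Proof.
under eq_bigr do rewrite mulrBl. rewrite sumrB.
rewrite (bigD1 s) //= eqxx mul1r big1 ?addr0; last by move=> v /negbTE ->; rewrite mul0r.
rewrite (bigD1 g) //= eqxx mul1r big1 ?addr0 //; by move=> v /negbTE ->; rewrite mul0r.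
Qed.

Lemma castmx_mulmx (R : pzRingType) p a b q (e : a = b) (B : 'M[R]_(p, a)) (x : 'M[R]_(b, q)) :
  castmx (erefl, e) B *m x = B *m castmx (esym e, erefl) x.
Proof. by case: b / e x => x; rewrite !castmx_id. Qed.

Lemma ker_rank1 {R : fieldType} {k n : nat} (O : 'M[R]_(k, n)) (y : 'cV[R]_n) :
  (0 < n)%N -> \rank O = n.-1 -> O *m (const_mx 1 : 'cV[R]_n) = 0 -> O *m y = 0 ->
  exists c : R, y = c *: const_mx 1.
Proof.
move=> n0 rO O1 Oy.
have Ky : (y^T <= kermx O^T)%MS by apply/sub_kermxP; rewrite -trmx_mul Oy trmx0.
have Ku : ((const_mx 1 : 'rV[R]_n) <= kermx O^T)%MS.
  by apply/sub_kermxP; rewrite -(trmx_const n 1 (1 : R)) -trmx_mul O1 trmx0.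
have ru : \rank (const_mx 1 : 'rV[R]_n) = 1%N.
  rewrite rank_rV; suff -> : (const_mx 1 : 'rV[R]_n) != 0 by [].
  by apply/eqP => /matrixP/(_ 0 (Ordinal n0)); rewrite !mxE => /eqP; rewrite oner_eq0.
have rK : \rank (kermx O^T) = 1%N by rewrite mxrank_ker mxrank_tr rO; case: n n0 {O y rO O1 Oy Ky Ku ru} => // n; rewrite subSn // subnn.
have Kle : (kermx O^T <= (const_mx 1 : 'rV[R]_n))%MS.
  case: (mxrank_leqif_sup Ku) => _ eqC. by rewrite -eqC ru rK.
have : (y^T <= (const_mx 1 : 'rV[R]_n))%MS by apply: submx_trans Ky Kle.
case/submxP => D yD; exists (D 0 0).
rewrite -[y]trmxK yD (mx11_scalar D) mul_scalar_mx linearZ /= trmx_const.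
by rewrite mxE eqxx mulr1n.
Qed.

Lemma connected_const {R : Type} {T mE : nat} (srcE tgtE : 'I_mE -> 'I_T) (f : 'I_T -> R) :
  graph_connected srcE tgtE -> (forall e, f (srcE e) = f (tgtE e)) ->
  forall u v, f u = f v.
Proof.
move=> hc hf u v; move: (hc u v) => /connectP [p pth ->] {v}.
elim: p u pth => [|w p IH] u //= /andP [a pth].
rewrite -(IH w pth); case/existsP: a => e /orP [] /andP [/eqP <- /eqP <-] //.
Qed.

Lemma Mx_entry {R : pzRingType} {T n mE : nat} (srcE tgtE : 'I_mE -> 'I_T)
  (x : 'cV[R]_(T * n)) (k : 'I_(mE * n)) :
  (kron (incidence srcE tgtE) (1%:M : 'M[R]_n) *m x) k 0 =
  x (idx (srcE (ord_div k)) (ord_mod k)) 0 - x (idx (tgtE (ord_div k)) (ord_mod k)) 0.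
Proof.
rewrite mxE sum_idx.
under eq_bigr => t _.
  under eq_bigr => j _ do rewrite !mxE ord_div_idx ord_mod_idx.
  rewrite (bigD1 (ord_mod k)) //= eqxx mulr1 big1 ?addr0; last first.
    by move=> j /negbTE; rewrite eq_sym => ->; rewrite mulr0 mul0r.
  over.
by rewrite inc_sum.
Qed.

Lemma Cx_blocks {R : pzRingType} {T n : nat} (m : 'I_T -> nat)
  (Ct : forall t, 'M[R]_(m t, n)) (x : 'cV[R]_(T * n)) :
  blockdiag Ct *m x = \mxcol_t (Ct t *m \col_j x (idx t j) 0).
Proof.
rewrite /blockdiag castmx_mulmx; set X := castmx _ x.
rewrite -(submxcolK X) mul_mxblock_mxrow; apply: eq_mxcol => t.
rewrite (bigD1 t) //= eqxx big1 ?addr0; last first.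
  by move=> j /negbTE; rewrite eq_sym => ->; rewrite mul0mx.
congr (_ *m _); apply/matrixP => j l; rewrite !mxE castmxE ord1 /=.
congr (x _ _); apply/val_inj.
transitivity (nat_of_ord (@tagnat.Rank T (fun _ => n) t j)); first by [].
by rewrite tagnat.RankEsum sum_lt_const.
Qed.

Lemma uTu_sum {R : pzRingType} {p : nat} (u : 'cV[R]_p) :
  (u^T *m u) 0 0 = \sum_i u i 0 ^+ 2.
Proof. by rewrite mxE; apply: eq_bigr => i _; rewrite mxE expr2. Qed.

Lemma uTu_ge0 {R : realFieldType} {p : nat} (u : 'cV[R]_p) : 0 <= (u^T *m u) 0 0.
Proof. by rewrite uTu_sum; apply: sumr_ge0 => i _; apply: sqr_ge0. Qed.

Lemma uTu_eq0 {R : realFieldType} {p : nat} (u : 'cV[R]_p) : (u^T *m u) 0 0 = 0 -> u = 0.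
Proof.
rewrite uTu_sum => /psumr_eq0P H; apply/matrixP => i j; rewrite ord1 mxE.
by apply/eqP; rewrite -sqrf_eq0; apply/eqP; apply: H => // k _; apply: sqr_ge0.
Qed.

Theorem proposition3 (R : realFieldType) (n T : nat)
  (hn : (2 <= n)%N) (hT : (2 <= T)%N)
  (mE : nat) (srcE tgtE : 'I_mE -> 'I_T)
  (hG : simple_oriented_graph srcE tgtE)
  (hGc : graph_connected srcE tgtE)
  (m : 'I_T -> nat) (src tgt : forall t : 'I_T, 'I_(m t) -> 'I_n)
  (hGt : forall t, simple_oriented_graph (src t) (tgt t))
  (mu : R) (hmu : 0 < mu) :
  let D : 'M[R]_(mE, T) := incidence srcE tgtE in
  let M : 'M[R]_(mE * n, T * n) := kron D (1%:M : 'M[R]_n) in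
  let Ct : forall t : 'I_T, 'M[R]_(m t, n) :=
    fun t => incidence (src t) (tgt t) in
  let C := blockdiag Ct in
  let O := vstack Ct in
  let P : 'M[R]_(T * n) :=
    kron (1%:M : 'M[R]_T) (1%:M - n%:R^-1 *: const_mx 1 : 'M[R]_n) in
  let A : 'M[R]_(T * n) := mu *: (M^T *m M) + C^T *m C in
  \rank O = n.-1 ->
  (forall x : 'cV[R]_(T * n), A *m x = 0 <-> exists c : R, x = c *: const_mx 1)
  /\ (exists X : 'M[R]_(T * n), P = A *m X).
Proof.
move=> D M Ct C O P A rO.
have n0 : (0 < n)%N by apply: leq_trans hn.
have T0 : (0 < T)%N by apply: leq_trans hT.
pose t0 : 'I_T := Ordinal T0.
have Ct1 : forall t, Ct t *m (const_mx 1 : 'cV[R]_n) = 0.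
  move=> t; apply/matrixP => i j; rewrite !mxE.
  under eq_bigr do rewrite !mxE.
  by rewrite inc_sum subrr.
have O1 : O *m (const_mx 1 : 'cV[R]_n) = 0.
  by rewrite /O /vstack mxcol_mul (eq_mxcol Ct1) mxcol0.
have AE : forall x : 'cV[R]_(T * n),
    A *m x = mu *: (M^T *m (M *m x)) + C^T *m (C *m x).
  by move=> x; rewrite /A mulmxDl -scalemxAl !mulmxA.
have qE : forall x : 'cV[R]_(T * n),
    x^T *m A *m x = mu *: ((M *m x)^T *m (M *m x)) + (C *m x)^T *m (C *m x).
  move=> x; rewrite -mulmxA AE mulmxDr -scalemxAr !trmx_mul !mulmxA.
  by [].
have key : forall x : 'cV[R]_(T * n), A *m x = 0 <-> exists c : R, x = c *: const_mx 1.
  move=> x; split.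
  - move=> Ax.
    have q0 : (x^T *m A *m x) 0 0 = 0 by rewrite -mulmxA Ax mulmx0 mxE.
    move: q0; rewrite qE mxE [X in X + _]mxE.
    move/eqP; rewrite paddr_eq0; last 2 first.
    + by apply: mulr_ge0; [apply: ltW | apply: uTu_ge0].
    + exact: uTu_ge0.
    case/andP; rewrite mulf_eq0 gt_eqF //= => /eqP/uTu_eq0 Mx0 /eqP/uTu_eq0 Cx0.
    have hM : forall e j, x (idx (srcE e) j) 0 = x (idx (tgtE e) j) 0.
      move=> e j; have := Mx_entry srcE tgtE x (idx e j).
      rewrite -/D -/M Mx0 mxE ord_div_idx ord_mod_idx => /eqP.
      by rewrite eq_sym subr_eq0 => /eqP.
    have hc : forall t j, x (idx t j) 0 = x (idx t0 j) 0.
      by move=> t j; apply: (@connected_const _ _ _ srcE tgtE (fun t => x (idx t j) 0) hGc).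
    pose y : 'cV[R]_n := \col_j x (idx t0 j) 0.
    have Cy : forall t, Ct t *m y = 0.
      move=> t; move: Cx0; rewrite /C Cx_blocks => /(congr1 (fun X => submxcol X t)).
      rewrite mxcolK submxcol0 => <-; congr (_ *m _).
      by apply/matrixP => j l; rewrite ord1 !mxE hc.
    have Oy : O *m y = 0 by rewrite /O /vstack mxcol_mul (eq_mxcol Cy) mxcol0.
    have [c yc] := ker_rank1 O y n0 rO O1 Oy.
    exists c; apply/matrixP => k l; rewrite ord1 -(idx_div_mod k) hc.
    have := congr1 (fun X : 'cV[R]_n => X (ord_mod k) 0) yc; rewrite !mxE => ->.
    by [].
  - case=> c ->.
    have Mx : M *m (c *: const_mx 1 : 'cV[R]_(T * n)) = 0.
      by apply/matrixP => k l; rewrite ord1 Mx_entry !mxE subrr.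
    have Cx : C *m (c *: const_mx 1 : 'cV[R]_(T * n)) = 0.
      rewrite /C Cx_blocks -(mxcol0 (p_ := m)); apply: eq_mxcol => t.
      have -> : \col_j (c *: (const_mx 1 : 'cV[R]_(T * n))) (idx t j) 0 = c *: const_mx 1.
        by apply/matrixP => j l; rewrite !mxE.
      by rewrite -scalemxAr Ct1 scaler0.
    by rewrite AE Mx Cx !mulmx0 scaler0 addr0.
split=> //.
have Asym : A^T = A.
  by rewrite /A linearD /= linearZ /= !trmx_mul !trmxK.
have A1 : A *m (const_mx 1 : 'cV[R]_(T * n)) = 0.
  by apply/key; exists 1; rewrite scale1r.
pose S := kermx (const_mx 1 : 'cV[R]_(T * n)).
have AS : (A <= S)%MS by apply/sub_kermxP.
have NP : (0 < T * n)%N by rewrite muln_gt0 T0 n0.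
have rS : \rank S = (T * n).-1.
  rewrite mxrank_ker -mxrank_tr trmx_const rank_rV.
  suff -> : (const_mx 1 : 'rV[R]_(T * n)) != 0 by rewrite subn1.
  by apply/eqP => /matrixP/(_ 0 (Ordinal NP)); rewrite !mxE => /eqP; rewrite oner_eq0.
have kerA : (kermx A <= (const_mx 1 : 'rV[R]_(T * n)))%MS.
  apply/row_subP => i; set w := row i (kermx A).
  have wA : w *m A = 0 by rewrite /w -row_mul mulmx_ker row0.
  have : A *m w^T = 0 by rewrite -Asym -trmx_mul wA trmx0.
  case/key => c wc.
  rewrite -[w]trmxK wc linearZ /= trmx_const.
  by apply: scalemx_sub; apply: submx_refl.
have rk : (\rank (kermx A) <= 1)%N.
  by apply: leq_trans (mxrankS kerA) _; apply: rank_leq_row.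
have SA : (S <= A)%MS.
  case: (mxrank_leqif_sup AS) => le eqC; rewrite -eqC eqn_leq le /= rS.
  move: rk; rewrite mxrank_ker; have := rank_leq_row A; lia.
have PS : (P^T <= S)%MS.
  apply/sub_kermxP; apply/matrixP => i l; rewrite ord1 !mxE sum_idx.
  under eq_bigr => t _ do under eq_bigr => j _ do rewrite !mxE ord_div_idx ord_mod_idx.
  rewrite (bigD1 (ord_div i)) //= [X in _ + X]big1 ?addr0; last first.
    by move=> t /negbTE ->; apply: big1 => j _; rewrite !mul0r.
  under eq_bigr => j _ do rewrite eqxx mul1r mulr1 mulr1.
  rewrite sumrB (bigD1 (ord_mod i)) //= eqxx big1 ?addr0; last first.
    by move=> j /negbTE; rewrite eq_sym => ->.
  rewrite sumr_const card_ord -[n%:R^-1 *+ n]mulr_natr mulVf ?subrr //.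
  by rewrite pnatr_eq0 -lt0n.
case/submxP: (submx_trans PS SA) => X PX.
exists X^T; by rewrite -[P]trmxK PX trmx_mul Asym.
Qed.
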